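(* Let $G$ be a simple graph with at least one edge, maximum degree $\Delta(G)$ and $t(G)$ triangles. If $t(G)\le\lfloor(\Delta(G)+1)/3\rfloor$, then $\lambda_1=\mu_1$, where $\lambda_1$ is the largest $\mathcal{H}$-eigenvalue of $G$ and $\mu_1$ is the largest Laplacian eigenvalue of $G$.
   Context: For an oriented edge $e$ write $e^-$ for its tail and $e^+$ for its head. For distinct edges $e,e'$: $e\leftrightarrow e'$ means $e^+=e'^-$ or $e'^+=e^-$; $e\overset{\pm}{\sim}e'$ means $e^+=e'^+$ or $e^-=e'^-$; $e\vartriangle e'$ means $e,e'$ are two edges of a common triangle. $\triangle(e)$ is the number of triangles containing $e$. The Helmholtzian matrix $\mathcal{H}(G)=(h_{ee'})$ is indexed by edges, with $h_{ee}=\triangle(e)+2$, and for $e\ne e'$: $h_{ee'}=-1$ if $e\leftrightarrow e'$ and not $e\vartriangle e'$; $h_{ee'}=1$ if $e\overset{\pm}{\sim}e'$ and not $e\vartriangle e'$; $h_{ee'}=0$ otherwise. The $\mathcal{H}$-eigenvalues are the eigenvalues of $\mathcal{H}(G)$ for an arbitrary orientation (independent of the orientation). The Laplacian matrix is $L(G)=D(G)-A(G)$. *)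

(* Defs.v *)
From HB Require Import structures.
From mathcomp Require Import all_boot all_order all_algebra.
Set Implicit Arguments. Unset Strict Implicit. Unset Printing Implicit Defensive.
Import Order.TTheory GRing.Theory Num.Theory.
Local Open Scope ring_scope.

(* A simple graph on a finite vertex type V is a symmetric irreflexive
   relation e : rel V.  Vertices are indexed by 'I_#|V| via enum_val. *)
Definition simple_graph (V : finType) (e : rel V) : Prop :=
  (forall x, ~~ e x x) /\ (forall x y, e x y = e y x).

Definition orientation (V : finType) (e o : rel V) : Prop :=
  (forall x y, o x y -> e x y) /\ (forall x y, e x y -> (o x y (+) o y x)).

(* oriented edges (tail, head) *)
Definition oedges (V : finType) (o : rel V) : {set V * V} :=
  [set p : V * V | o p.1 p.2].

Definition is_clique (V : finType) (e : rel V) (S : {set V}) : bool :=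
  [forall x in S, forall y in S, (x != y) ==> e x y].

Definition num_triangles (V : finType) (e : rel V) : nat :=
  #|[set S : {set V} | (#|S| == 3)%N && is_clique e S]|.

Definition degree (V : finType) (e : rel V) (v : V) : nat := #|[set w | e v w]|.

Definition max_degree (V : finType) (e : rel V) : nat :=
  \max_(v : V) degree e v.

Definition tri_edge (V : finType) (e : rel V) (a : V * V) : nat :=
  #|[set w | e a.1 w && e a.2 w]|.

Definition in_common_triangle (V : finType) (e : rel V) (a b : V * V) : bool :=
  let S := [set a.1; a.2; b.1; b.2] in (#|S| == 3)%N && is_clique e S.

Definition head_tail (V : finType) (a b : V * V) : bool :=
  (a.2 == b.1) || (b.2 == a.1).

Definition same_end (V : finType) (a b : V * V) : bool :=
  (a.2 == b.2) || (a.1 == b.1).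

Definition helm_entry (R : numDomainType) (V : finType) (e : rel V)
    (a b : V * V) : R :=
  if a == b then (tri_edge e a + 2)%:R
  else if head_tail a b && ~~ in_common_triangle e a b then -1
  else if same_end a b && ~~ in_common_triangle e a b then 1
  else 0.

Definition helmholtzian (R : numDomainType) (V : finType) (e o : rel V) :
    'M[R]_#|oedges o| :=
  \matrix_(i, j) helm_entry R e (enum_val i) (enum_val j).

Definition adjacency (R : numDomainType) (V : finType) (e : rel V) :
    'M[R]_#|V| :=
  \matrix_(i, j) (e (enum_val i) (enum_val j))%:R.

Definition degree_mx (R : numDomainType) (V : finType) (e : rel V) :
    'M[R]_#|V| :=
  diag_mx (\row_i (degree e (enum_val i))%:R).

Definition laplacian (R : numDomainType) (V : finType) (e : rel V) :
    'M[R]_#|V| :=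
  degree_mx R e - adjacency R e.

Definition largest_eigenvalue (F : numFieldType) (n : nat) (A : 'M[F]_n) (l : F) : Prop :=
  eigenvalue A l /\ forall m, eigenvalue A m -> m <= l.

(* Main.v *)
Require Import Defs.
From HB Require Import structures.
From mathcomp Require Import all_boot all_order all_algebra.
From mathcomp Require Import complex ring lra zify.
Import Order.TTheory GRing.Theory Num.Theory.
Local Open Scope ring_scope.

Section Ray.
Local Open Scope sesquilinear_scope.
Variable R : rcfType.
Local Notation C := (R[i]).
Local Notation f := (real_complex R).

Lemma realC (k : R) : (f k : C) \is Num.real.
Proof.
by rewrite realE -[0 : C]/(f 0) !lecR -realE num_real.
Qed.

Lemma conjf (k : R) : (f k)^* = f k.
Proof. exact: conj_Creal (realC k). Qed.

Lemma rayleigh n (A : 'M[R]_n) (x : 'rV[R]_n) c :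
  A^T = A -> x != 0 -> c * (x *m x^T) 0 0 <= (x *m A *m x^T) 0 0 ->
  exists2 l, eigenvalue A l & c <= l.
Proof.
move=> Asym x0 hc.
have [i0 xi0] : exists i, x 0 i != 0.
  apply/existsP; apply: contraR x0 => /existsPn h.
  by apply/eqP/rowP => i; rewrite mxE; apply/eqP; move: (h i); rewrite negbK.
set AC := A ^ f.
have herm : AC \is hermsymmx.
  apply/is_hermitianmxP; rewrite expr0 scale1r; apply/matrixP => i j.
  rewrite !mxE conjf; congr (f _).
  by rewrite -{1}Asym mxE.
have /orthomx_spectralP AE := hermitian_normalmx herm.
set P := spectralmx AC in AE; set d := spectral_diag AC in AE.
have Pu : P \is unitarymx := spectral_unitarymx AC.
have PP : P *m P^t* = 1%:M by apply/unitarymxP.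
have PP' : P^t* *m P = 1%:M by apply: mulmx1C.
rewrite invmx_unitary // in AE.
have dreal : forall i, d 0 i \is Num.real.
  by move=> i; have /mxOverP := hermitian_spectral_diag_real herm; apply.
have [k _ kmax] := @real_arg_maxP _ _ i0 xpredT (fun i => d 0 i) isT (fun i _ => dreal i).
set r := @complex.Re R (d 0 k).
have dk : d 0 k = f r by rewrite complexRe; apply/esym/Creal_ReP.
exists r.
  have : eigenvalue AC (d 0 k).
    apply/eigenvalueP; exists (row k P).
      rewrite AE -row_mul !mulmxA PP mul1mx mul_diag_mx; apply/rowP => j.
      by rewrite !mxE.
    apply/eqP => /(congr1 (fun M => (M *m P^t*) 0 k)).
    rewrite -row_mul PP mul0mx !mxE eqxx => /eqP; by rewrite oner_eq0.
  by rewrite dk !eigenvalue_root_char -map_char_poly fmorph_root.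
set s := (x *m x^T) 0 0.
have s0 : 0 < s.
  rewrite lt_def; apply/andP; split; last first.
    by rewrite /s mxE sumr_ge0 // => i _; rewrite mxE -expr2 sqr_ge0.
  apply/eqP; rewrite /s mxE => h.
  have hnn : forall i : 'I_n, true -> 0 <= x 0 i * x^T i 0.
    by move=> i _; rewrite mxE -expr2 sqr_ge0.
  have := @psumr_eq0P _ _ xpredT _ hnn h i0 isT.
  by rewrite mxE => /eqP; rewrite mulf_eq0 orbb (negbTE xi0).
set xC := x ^ f.
have xCT : xC^t* = x^T ^ f.
  by apply/matrixP => i j; rewrite !mxE conjf.
set y := xC *m P^t*.
have yT : y^t* = P *m xC^t*.
  rewrite /y trmx_mul map_mxM.
  apply/matrixP => i j; rewrite !mxE; apply: eq_bigr => l _.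
  by rewrite !mxE; congr (_ * _); apply: conjCK.
have key : (xC *m AC *m xC^t*) 0 0 <= d 0 k * (xC *m xC^t*) 0 0.
  rewrite AE !mulmxA -/y -[y *m _ *m P *m _]mulmxA -yT.
  have -> : xC *m xC^t* = y *m y^t*.
    by rewrite yT /y !mulmxA -[_ *m P^t* *m P]mulmxA PP' mulmx1.
  rewrite mul_mx_diag !mxE mulr_sumr; apply: ler_sum => j _.
  rewrite !mxE mulrAC [leRHS]mulrC ler_wpM2l ?mul_conjC_ge0 //.
  by move: (kmax j isT).
have e1 : (xC *m AC *m xC^t*) 0 0 = f ((x *m A *m x^T) 0 0).
  by rewrite xCT /xC /AC -!map_mxM mxE.
have e2 : (xC *m xC^t*) 0 0 = f s.
  by rewrite xCT /xC -!map_mxM mxE.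
rewrite e1 e2 dk -rmorphM lecR in key.
by rewrite -(ler_pM2r s0) (le_trans hc) // mulrC.
Qed.
End Ray.

Section Comb.
Variables (V : finType) (e : rel V).
Hypothesis Eirr : forall x, e x x = false.
Hypothesis Esym : forall x y, e x y = e y x.

Lemma ict3 (u w z : V) : u != w -> w != z -> u != z ->
  (#|[set u; w; z]| = 3)%N /\ is_clique e [set u; w; z] = [&& e u w, e w z & e u z].
Proof.
move=> uw wz uz; split.
  have -> : [set u; w; z] = u |: (w |: [set z]) by apply/setP => t; rewrite !inE orbA.
  by rewrite !cardsU1 cards1 !inE negb_or uw uz wz.
apply/idP/idP.
  move=> /forall_inP h.
  have H a b : a \in [set u; w; z] -> b \in [set u; w; z] -> a != b -> e a b.
    by move=> ha hb ab; move: (h a ha) => /forall_inP /(_ b hb) /implyP; apply.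
  by rewrite !H ?inE ?eqxx ?orbT.
case/and3P => h1 h2 h3.
apply/forall_inP => a; rewrite !inE => /orP [/orP [] | ] /eqP ->;
apply/forall_inP => b; rewrite !inE => /orP [/orP [] | ] /eqP ->;
by rewrite ?eqxx //= ?h1 ?h2 ?h3 ?implybT // Esym ?h1 ?h2 ?h3 ?implybT.
Qed.

Lemma card4 (p q x y : V) : p != q -> p != x -> p != y -> q != x -> q != y -> x != y ->
  #|[set p; q; x; y]| = 4%N.
Proof.
move=> H H0 H1 H2 H3 H4.
have -> : [set p; q; x; y] = p |: (q |: (x |: [set y])) by apply/setP => t; rewrite !inE !orbA.
rewrite !cardsU1 cards1 !inE !negb_or.
by move: H H0 H1 H2 H3 H4 => -> -> -> -> -> ->.
Qed.

End Comb.

Section Kern.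
Variables (V : finType) (e : rel V).
Hypothesis Eirr : forall x, e x x = false.
Hypothesis Esym : forall x y, e x y = e y x.
Variables (x y : V).
Hypothesis xy : x != y.
Hypothesis exy : e x y.
Let N w := e x w && e y w.

Lemma kern p q : e p q ->
  ((((p,q) != (x,y)) && ((q,p) != (x,y)) && in_common_triangle e (p,q) (x,y)) : nat) =
  (((p==x) && N q) + ((q==x) && N p) + ((p==y) && N q) + ((q==y) && N p))%N.
Proof.
move=> epq; have pq : p != q by apply: contraTneq epq => ->; rewrite Eirr.
have yx : y != x by rewrite eq_sym.
rewrite /in_common_triangle /N /=.
case: (eqVneq p x) => [?|px]; first subst p.
  case: (eqVneq q y) => [?|qy]; first subst q.
    by rewrite eqxx /= !Eirr ?(negbTE yx) ?(negbTE xy) !andbF.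
  have qx : q != x by rewrite eq_sym.
  have -> : [set x; q; x; y] = [set q; x; y] by apply/setP => t; rewrite !inE; case: (t == x); rewrite ?orbT.
  have [-> ->] := @ict3 V e Esym _ _ _ qx xy qy.
  rewrite !xpair_eqE !eqxx ?(negbTE qy) ?(negbTE qx) ?(negbTE yx) ?(negbTE xy) ?(negbTE px) ?(negbTE py) /= ?exy.
  by rewrite [e q x]Esym [e y q]Esym; case: (e x q); case: (e q y).
case: (eqVneq p y) => [?|py]; first subst p.
  case: (eqVneq q x) => [?|qx]; first subst q.
    by rewrite eqxx /= !Eirr ?(negbTE yx) ?(negbTE xy) !andbF.
  have qy : q != y by rewrite eq_sym.
  have -> : [set y; q; x; y] = [set q; x; y] by apply/setP => t; rewrite !inE; case: (t == y); rewrite ?orbT ?orbF.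
  have [-> ->] := @ict3 V e Esym _ _ _ qx xy qy.
  rewrite !xpair_eqE !eqxx ?(negbTE qy) ?(negbTE qx) ?(negbTE yx) ?(negbTE xy) ?(negbTE px) ?(negbTE py) /= ?exy.
  by rewrite [e q x]Esym [e y q]Esym; case: (e x q); case: (e q y).
case: (eqVneq q x) => [?|qx]; first subst q.
  have -> : [set p; x; x; y] = [set p; x; y] by apply/setP => t; rewrite !inE; case: (t == x); rewrite ?orbT ?orbF.
  have [-> ->] := @ict3 V e Esym _ _ _ px xy py.
  rewrite !xpair_eqE !eqxx ?(negbTE qy) ?(negbTE qx) ?(negbTE yx) ?(negbTE xy) ?(negbTE px) ?(negbTE py) /= ?exy.
  by rewrite [e p x]Esym [e y p]Esym; case: (e x p); case: (e p y).
case: (eqVneq q y) => [?|qy]; first subst q.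
  have -> : [set p; y; x; y] = [set p; x; y] by apply/setP => t; rewrite !inE; case: (t == x); case: (t == y); rewrite ?orbT ?orbF.
  have [-> ->] := @ict3 V e Esym _ _ _ px xy py.
  rewrite !xpair_eqE !eqxx ?(negbTE qy) ?(negbTE qx) ?(negbTE yx) ?(negbTE xy) ?(negbTE px) ?(negbTE py) /= ?exy.
  by rewrite [e p x]Esym [e y p]Esym; case: (e x p); case: (e p y).
rewrite (@card4 V _ _ _ _ pq px py qx qy xy) ?(negbTE px) ?(negbTE py) ?(negbTE qx) ?(negbTE qy).
by rewrite !andbF.
Qed.
End Kern.

Section Main.
Variables (R : rcfType) (V : finType) (e o : rel V).
Hypothesis Eirr : forall x, e x x = false.
Hypothesis Esym : forall x y, e x y = e y x.
Hypothesis Osub : forall {x y}, o x y -> e x y.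
Hypothesis Oxor : forall {x y}, e x y -> o x y (+) o y x.

Lemma Oind u w : (o u w)%:R + (o w u)%:R = (e u w)%:R :> R.
Proof.
case E0: (e u w).
  by move: (Oxor E0); case: (o u w); case: (o w u) => //= _; rewrite ?addr0 ?add0r.
have -> : o u w = false by apply/negP => /Osub; rewrite E0.
have -> : o w u = false by apply/negP => /Osub; rewrite Esym E0.
by rewrite addr0.
Qed.

Lemma Oasym u w : o u w -> o w u = false.
Proof. by move=> h; move: (Oxor (Osub h)); rewrite h; case: (o w u). Qed.

Definition inc (a : V * V) (v : V) : R := (v == a.2)%:R - (v == a.1)%:R.
Definition dot (a b : V * V) : R := \sum_v inc a v * inc b v.

Lemma sum_eq1 (F : V -> R) x : \sum_v (v == x)%:R * F v = F x.
Proof.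
rewrite (bigD1 x) //= eqxx mul1r big1 ?addr0 // => v /negbTE ->; by rewrite mul0r.
Qed.

Lemma sum_eq1' (F : V -> R) x : \sum_v (x == v)%:R * F v = F x.
Proof. by under eq_bigr => v _ do rewrite eq_sym; apply: sum_eq1. Qed.

Lemma dotE a b : dot a b =
  (a.2 == b.2)%:R - (a.2 == b.1)%:R - (a.1 == b.2)%:R + (a.1 == b.1)%:R.
Proof.
rewrite /dot /inc.
under eq_bigr => v _ do rewrite mulrBl !mulrBr.
rewrite !big_split /= !sumrN !sum_eq1 sumrB !sum_eq1.
by ring.
Qed.

Local Notation E := (oedges o).

Lemma sumE (F : V * V -> R) :
  \sum_(i < #|E|) F (enum_val i) = \sum_p \sum_q (o p q)%:R * F (p, q).
Proof.
rewrite -(big_enum_val (A := mem E)) /= big_mkcond pair_big /=.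
by apply: eq_bigr => [[p q]] _; rewrite /oedges inE /=; case: (o p q); rewrite ?mul1r ?mul0r.
Qed.

Lemma sumV (F : V -> R) : \sum_(j < #|V|) F (enum_val j) = \sum_v F v.
Proof.
by rewrite -(big_enum_val (A := mem V)) /=.
Qed.


Lemma card_setR (P : pred V) : (#|[set u | P u]|)%:R = \sum_u (P u)%:R :> R.
Proof.
rewrite -sum1_card natr_sum big_mkcond /=; apply: eq_bigr => u _.
by rewrite inE; case: (P u).
Qed.

Lemma degreeR v : (degree e v)%:R = \sum_u (e v u)%:R :> R.
Proof. exact: card_setR. Qed.

Lemma sum_swap1 (F : V -> V -> R) v :
  \sum_p \sum_q (q == v)%:R * F p q = \sum_p F p v.
Proof. by apply: eq_bigr => p _; rewrite sum_eq1. Qed.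

Lemma sum_swap2 (F : V -> V -> R) v :
  \sum_p \sum_q (p == v)%:R * F p q = \sum_q F v q.
Proof.
under eq_bigr => p _ do rewrite -mulr_sumr.
by rewrite sum_eq1.
Qed.

Lemma Lpt v w : \sum_p \sum_q (o p q)%:R * (inc (p,q) v * inc (p,q) w) =
  (degree e v)%:R * (v == w)%:R - (e v w)%:R.
Proof.
rewrite /inc /=.
have H p q : (o p q)%:R * (((v == q)%:R - (v == p)%:R) * ((w == q)%:R - (w == p)%:R)) =
   (q == v)%:R * ((o p q)%:R * ((w == q)%:R - (w == p)%:R)) +
   (p == v)%:R * ((o p q)%:R * ((w == p)%:R - (w == q)%:R)) :> R.
  by rewrite ![(v == _)]eq_sym; ring.
under eq_bigr => p _ do under eq_bigr => q _ do rewrite H.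
under eq_bigr => p _ do rewrite big_split /=.
rewrite big_split /= sum_swap1 sum_swap2.
under eq_bigr => p _ do rewrite mulrBr.
under [X in _ + X = _]eq_bigr => q _ do rewrite mulrBr.
rewrite !sumrB -!mulr_suml.
have S1 (F : V -> R) u : \sum_i F i * (u == i)%:R = F u.
  by under eq_bigr => i _ do rewrite mulrC; rewrite sum_eq1'.
rewrite !S1 degreeR.
have -> : \sum_u (e v u)%:R = \sum_u ((o u v)%:R + (o v u)%:R) :> R.
  by apply: eq_bigr => u _; rewrite addrC Oind.
rewrite big_split /= -(Oind v w) [(w == v)]eq_sym; ring.
Qed.


Definition B : 'M[R]_(#|E|, #|V|) := \matrix_(i, j) inc (enum_val i) (enum_val j).

Lemma BtB : B^T *m B = laplacian R e.
Proof.
apply/matrixP => i j; rewrite !mxE.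
under eq_bigr => k _ do rewrite !mxE.
rewrite (sumE (fun a => inc a (enum_val i) * inc a (enum_val j))) Lpt.
rewrite /laplacian /degree_mx /adjacency.
by rewrite (inj_eq enum_val_inj) mulr_natr.
Qed.


Lemma irr_o u w : o u w -> u != w.
Proof. by move=> /Osub; apply: contraTneq => ->; rewrite Eirr. Qed.

Lemma Qentry (a b : V * V) : o a.1 a.2 -> o b.1 b.2 ->
  helm_entry R e a b - dot a b =
  if a == b then (tri_edge e a)%:R else (in_common_triangle e a b)%:R * - dot a b.
Proof.
case: a => a1 a2; case: b => b1 b2 /= oa ob.
have a12 := irr_o _ _ oa; have b12 := irr_o _ _ ob.
rewrite /helm_entry dotE /=.
case: (eqVneq (a1,a2) (b1,b2)) => [[<- <-]|ab].
  rewrite eqxx (negbTE a12) (eq_sym a2 a1) (negbTE a12) natrD eqxx /=; ring.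
case ict: (in_common_triangle e (a1, a2) (b1, b2)) => /=.
  by rewrite !andbF; ring.
rewrite !andbT /head_tail /same_end /= mul0r [b2 == a1]eq_sym.
have c1 : ~~ ((a2 == b2) && (a1 == b1)).
  by apply: contra ab => /andP [/eqP -> /eqP ->].
have c2 : ~~ ((a2 == b1) && (a1 == b2)).
  apply/negP => /andP [/eqP h1 /eqP h2]; subst.
  by rewrite (Oasym _ _ oa) in ob.
have c3 : ~~ ((a2 == b2) && (a2 == b1)).
  by apply/negP => /andP [/eqP h1 /eqP h2]; subst; rewrite eqxx in b12.
have c4 : ~~ ((a1 == b1) && (a1 == b2)).
  by apply/negP => /andP [/eqP h1 /eqP h2]; subst; rewrite eqxx in b12.
have c5 : ~~ ((a2 == b2) && (a1 == b2)).
  by apply/negP => /andP [/eqP h1 /eqP h2]; subst; rewrite eqxx in a12.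
have c6 : ~~ ((a1 == b1) && (a2 == b1)).
  by apply/negP => /andP [/eqP h1 /eqP h2]; subst; rewrite eqxx in a12.
move: c1 c2 c3 c4 c5 c6.
case: (a2 == b2); case: (a2 == b1); case: (a1 == b2); case: (a1 == b1) => //= *; ring.
Qed.


Lemma ict_swap p q b : in_common_triangle e (q, p) b = in_common_triangle e (p, q) b.
Proof.
rewrite /in_common_triangle /=.
have -> : [set q; p; b.1; b.2] = [set p; q; b.1; b.2].
  by apply/setP => t; rewrite !inE; case: (t == p); case: (t == q); rewrite /= ?orbT.
by [].
Qed.

Lemma ict_sym a b : in_common_triangle e a b = in_common_triangle e b a.
Proof.
rewrite /in_common_triangle /=.
have -> : [set a.1; a.2; b.1; b.2] = [set b.1; b.2; a.1; a.2].
  by apply/setP => t; rewrite !inE; case: (t == a.1); case: (t == a.2); rewrite /= ?orbT ?orbF.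
by [].
Qed.

Lemma sum_ict (x y : V) (G : V -> V -> R) : o x y -> (forall p q, G p q = G q p) ->
  \sum_p \sum_q (o p q)%:R * ((((p, q) != (x, y)) && in_common_triangle e (p, q) (x, y))%:R * G p q)
  = \sum_w (e x w && e y w)%:R * (G x w + G y w).
Proof.
move=> oxy Gs.
have exy := Osub oxy; have xy := irr_o _ _ oxy.
set N := fun w => e x w && e y w.
set W := fun p q => (((p, q) != (x, y)) && ((q, p) != (x, y)) && in_common_triangle e (p, q) (x, y)).
have Wsym p q : W p q = W q p.
  by rewrite /W ict_swap; case: ((p, q) != (x, y)); case: ((q, p) != (x, y)).
have step1 p q : (o p q)%:R * ((((p, q) != (x, y)) && in_common_triangle e (p, q) (x, y))%:R * G p q)
   = (o p q)%:R * ((W p q)%:R * G p q) :> R.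
  case opq: (o p q); last by rewrite !mul0r.
  rewrite /W; congr (_ * ((_ : bool)%:R * _)).
  case: (eqVneq (q, p) (x, y)) => [[? ?]|]; last by rewrite andbT.
  by subst; rewrite (Oasym _ _ oxy) in opq.
under eq_bigr => p _ do under eq_bigr => q _ do rewrite step1.
set T := (X in X = _).
have T2 : T + T = \sum_p \sum_q (e p q)%:R * ((W p q)%:R * G p q).
  rewrite {2}/T exchange_big /T -big_split /=; apply: eq_bigr => p _.
  rewrite -big_split /=; apply: eq_bigr => q _.
  by rewrite Wsym (Gs q p) -mulrDl Oind.
have step4 p q : (e p q)%:R * ((W p q)%:R * G p q) =
   ((p == x) && N q)%:R * G x q + ((q == x) && N p)%:R * G p x +
   ((p == y) && N q)%:R * G y q + ((q == y) && N p)%:R * G p y :> R.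
  case epq: (e p q).
    rewrite mul1r /W (@kern V e Eirr Esym x y xy exy p q epq) !natrD !mulrDl.
    by congr (_ + _ + _ + _); case: eqP => [->|_] //=; rewrite !mul0r.
  rewrite mul0r.
  have h1 : ((p == x) && N q) = false.
    by apply/negP => /andP [/eqP ? /andP [h _]]; subst; rewrite h in epq.
  have h2 : ((q == x) && N p) = false.
    by apply/negP => /andP [/eqP ? /andP [h _]]; subst; rewrite Esym h in epq.
  have h3 : ((p == y) && N q) = false.
    by apply/negP => /andP [/eqP ? /andP [_ h]]; subst; rewrite h in epq.
  have h4 : ((q == y) && N p) = false.
    by apply/negP => /andP [/eqP ? /andP [_ h]]; subst; rewrite Esym h in epq.
  by rewrite h1 h2 h3 h4 !mul0r !addr0.
rewrite (eq_bigr _ (fun p _ => eq_bigr _ (fun q _ => step4 p q))) in T2.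
have S1 (P : pred V) (F : V -> R) (z : V) : \sum_p \sum_q ((p == z) && P q)%:R * F q = \sum_q (P q)%:R * F q.
  rewrite (bigD1 z) //= [X in _ + X]big1 ?addr0.
    by apply: eq_bigr => q _; rewrite eqxx.
  by move=> p pz; apply: big1 => q _; rewrite (negbTE pz) mul0r.
have S2 (P : pred V) (F : V -> R) (z : V) : \sum_p \sum_q ((q == z) && P p)%:R * F p = \sum_p (P p)%:R * F p.
  apply: eq_bigr => p _; rewrite (bigD1 z) //= [X in _ + X]big1 ?addr0.
    by rewrite eqxx.
  by move=> q qz; rewrite (negbTE qz) mul0r.
have T3 : \sum_p \sum_q (((p == x) && N q)%:R * G x q + ((q == x) && N p)%:R * G p x +
           ((p == y) && N q)%:R * G y q + ((q == y) && N p)%:R * G p y) =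
   \sum_q (N q)%:R * G x q + \sum_p (N p)%:R * G p x + \sum_q (N q)%:R * G y q + \sum_p (N p)%:R * G p y.
  rewrite -(S1 N (G x) x) -(S2 N (fun p => G p x) x) -(S1 N (G y) y) -(S2 N (fun p => G p y) y).
  by rewrite -!big_split; apply: eq_bigr => p _; rewrite -!big_split.
rewrite T3 in T2.
have E1 : \sum_p (N p)%:R * G p x = \sum_w (N w)%:R * G x w by apply: eq_bigr => w _; rewrite Gs.
have E2 : \sum_p (N p)%:R * G p y = \sum_w (N w)%:R * G y w by apply: eq_bigr => w _; rewrite Gs.
rewrite E1 E2 in T2.
have -> : \sum_w (N w)%:R * (G x w + G y w) = \sum_w (N w)%:R * G x w + \sum_w (N w)%:R * G y w.
  by rewrite -big_split /=; apply: eq_bigr => w _; rewrite mulrDr.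
lra.
Qed.


Definition Qent (a b : V * V) : R :=
  if a == b then (tri_edge e a)%:R else (in_common_triangle e a b)%:R * - dot a b.

Lemma dot_sym a b : dot a b = dot b a.
Proof. by apply: eq_bigr => v _; rewrite mulrC. Qed.

Lemma Qent_sym a b : Qent a b = Qent b a.
Proof.
rewrite /Qent eq_sym; case: eqP => [->//|_].
by rewrite ict_sym dot_sym.
Qed.

Lemma triR x y : (tri_edge e (x, y))%:R = \sum_w (e x w && e y w)%:R :> R.
Proof. exact: card_setR. Qed.

Lemma QB0 x y v : o x y ->
  \sum_p \sum_q (o p q)%:R * (Qent (x, y) (p, q) * inc (p, q) v) = 0.
Proof.
move=> oxy; have exy := Osub oxy; have xy := irr_o _ _ oxy.
have H p q : (o p q)%:R * (Qent (x, y) (p, q) * inc (p, q) v) =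
  ((p == x) && (q == y))%:R * ((o p q)%:R * ((tri_edge e (x, y))%:R * inc (p, q) v)) -
  (o p q)%:R * ((((p, q) != (x, y)) && in_common_triangle e (p, q) (x, y))%:R *
     (dot (p, q) (x, y) * inc (p, q) v)).
  rewrite /Qent eq_sym xpair_eqE ict_sym dot_sym.
  case: (eqVneq p x) => [->|_]; case: (eqVneq q y) => [->|_] /=; rewrite ?eqxx /=; ring.
under eq_bigr => p _ do under eq_bigr => q _ do rewrite H.
under eq_bigr => p _ do rewrite sumrB.
rewrite sumrB.
rewrite (@sum_ict x y (fun p q => dot (p, q) (x, y) * inc (p, q) v)) //; last first.
  by move=> p q; rewrite !dotE /inc /=; ring.
have -> : \sum_p \sum_q ((p == x) && (q == y))%:R *
    ((o p q)%:R * ((tri_edge e (x, y))%:R * inc (p, q) v)) =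
    (tri_edge e (x, y))%:R * inc (x, y) v.
  rewrite (bigD1 x) //= [X in _ + X]big1 ?addr0; last first.
    by move=> p px; apply: big1 => q _; rewrite (negbTE px) mul0r.
  rewrite (bigD1 y) //= [X in _ + X]big1 ?addr0; last first.
    by move=> q qy; rewrite (negbTE qy) andbF mul0r.
  by rewrite !eqxx oxy !mul1r.
rewrite triR mulr_suml; apply/eqP; rewrite subr_eq0; apply/eqP.
apply: eq_bigr => w _.
case Nw: (e x w && e y w); last by rewrite !mul0r.
move/andP: Nw => [exw eyw].
have wx : w != x by apply: contraTneq exw => ->; rewrite Eirr.
have wy : w != y by apply: contraTneq eyw => ->; rewrite Eirr.
rewrite !dotE /inc /= !eqxx (negbTE wx) (negbTE wy) (negbTE xy) [y == x]eq_sym (negbTE xy) /=.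
ring.
Qed.


Lemma dot_le1 (a b : V * V) : o a.1 a.2 -> o b.1 b.2 -> a != b -> `|dot a b| <= 1.
Proof.
case: a => a1 a2; case: b => b1 b2 /= oa ob ab.
have a12 := irr_o _ _ oa; have b12 := irr_o _ _ ob.
rewrite dotE /=.
have c1 : ~~ ((a2 == b2) && (a1 == b1)).
  by apply: contra ab => /andP [/eqP -> /eqP ->].
have c2 : ~~ ((a2 == b1) && (a1 == b2)).
  apply/negP => /andP [/eqP h1 /eqP h2]; subst.
  by rewrite (Oasym _ _ oa) in ob.
have c3 : ~~ ((a2 == b2) && (a2 == b1)).
  by apply/negP => /andP [/eqP h1 /eqP h2]; subst; rewrite eqxx in b12.
have c4 : ~~ ((a1 == b1) && (a1 == b2)).
  by apply/negP => /andP [/eqP h1 /eqP h2]; subst; rewrite eqxx in b12.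
have c5 : ~~ ((a2 == b2) && (a1 == b2)).
  by apply/negP => /andP [/eqP h1 /eqP h2]; subst; rewrite eqxx in a12.
have c6 : ~~ ((a1 == b1) && (a2 == b1)).
  by apply/negP => /andP [/eqP h1 /eqP h2]; subst; rewrite eqxx in a12.
move: c1 c2 c3 c4 c5 c6.
case: (a2 == b2); case: (a2 == b1); case: (a1 == b2); case: (a1 == b1) => //= *;
  rewrite ?subr0 ?sub0r ?add0r ?addr0 ?normrN ?normr1 ?normr0 //.
Qed.

Lemma sumQabs x y : o x y ->
  \sum_p \sum_q (o p q)%:R * `|Qent (x, y) (p, q)| <= 3 * (tri_edge e (x, y))%:R.
Proof.
move=> oxy.
have H p q : (o p q)%:R * `|Qent (x, y) (p, q)| <=
  ((p == x) && (q == y))%:R * ((o p q)%:R * (tri_edge e (x, y))%:R) +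
  (o p q)%:R * ((((p, q) != (x, y)) && in_common_triangle e (p, q) (x, y))%:R * 1).
  case opq: (o p q); last by rewrite !mul0r mulr0 addr0.
  rewrite !mul1r mulr1 /Qent.
  case: (eqVneq (x, y) (p, q)) => [[<- <-]|ne].
    by rewrite !eqxx /= normr_nat mul1r addr0.
  have -> : (p == x) && (q == y) = false.
    by apply/negP => /andP [/eqP ? /eqP ?]; subst; rewrite eqxx in ne.
  rewrite mul0r add0r /= ict_sym normrM normr_nat normrN.
  case: (in_common_triangle e (p, q) (x, y)); last by rewrite mul0r.
  by rewrite mul1r dot_le1 // eq_sym.
apply: le_trans; first by apply: ler_sum => p _; apply: ler_sum => q _; exact: H.
rewrite (eq_bigr _ (fun p _ => big_split _ _ _ _ _)) big_split /=.
rewrite (@sum_ict x y (fun _ _ => 1)) //.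
have -> : \sum_p \sum_q ((p == x) && (q == y))%:R * ((o p q)%:R * (tri_edge e (x, y))%:R)
    = (tri_edge e (x, y))%:R :> R.
  rewrite (bigD1 x) //= [X in _ + X]big1 ?addr0; last first.
    by move=> p px; apply: big1 => q _; rewrite (negbTE px) mul0r.
  rewrite (bigD1 y) //= [X in _ + X]big1 ?addr0; last first.
    by move=> q qy; rewrite (negbTE qy) andbF mul0r.
  by rewrite !eqxx oxy !mul1r.
rewrite triR.
rewrite -mulr_suml.
lra.
Qed.


Definition Q : 'M[R]_#|E| := helmholtzian R e o - B *m B^T.

Lemma oE (i : 'I_#|E|) : o (enum_val i).1 (enum_val i).2.
Proof. by have := enum_valP i; rewrite /oedges inE. Qed.

Lemma Qij i k : Q i k = Qent (enum_val i) (enum_val k).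
Proof.
rewrite /Q /helmholtzian !mxE.
under eq_bigr => l _ do rewrite !mxE.
rewrite (sumV (fun v => inc (enum_val i) v * inc (enum_val k) v)) -/(dot _ _).
by rewrite Qentry ?oE.
Qed.

Lemma QB : Q *m B = 0.
Proof.
apply/matrixP => i j; rewrite !mxE.
under eq_bigr => k _ do rewrite Qij mxE.
rewrite (sumE (fun a => Qent (enum_val i) a * inc a (enum_val j))).
have := oE i; case: (enum_val i) => x y /= oxy.
exact: QB0.
Qed.

Lemma Qsym : Q^T = Q.
Proof. by apply/matrixP => i j; rewrite mxE !Qij Qent_sym. Qed.

Lemma BtQ : B^T *m Q = 0.
Proof. by rewrite -Qsym -trmx_mul QB trmx0. Qed.

Lemma Hdec : helmholtzian R e o = B *m B^T + Q.
Proof. by rewrite /Q addrC subrK. Qed.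

Lemma gersh (x : 'rV[R]_#|E|) l : x != 0 -> x *m Q = l *: x ->
  exists2 b : V * V, o b.1 b.2 & l <= 3 * (tri_edge e b)%:R.
Proof.
move=> x0 xQ.
have [i0 xi0] : exists i, x 0 i != 0.
  apply/existsP; apply: contraR x0 => /existsPn h.
  by apply/eqP/rowP => i; rewrite mxE; apply/eqP; move: (h i); rewrite negbK.
have [k _ kmax] := @arg_maxP _ R _ i0 xpredT (fun i => `|x 0 i|) isT.
exists (enum_val k); first exact: oE.
have xk0 : 0 < `|x 0 k|.
  have h := kmax i0 isT; apply: (lt_le_trans _ h); by rewrite normr_gt0 xi0.
have ek : l * x 0 k = \sum_i x 0 i * Q i k.
  by move: xQ => /matrixP /(_ 0 k); rewrite !mxE => <-.
have : `|l| * `|x 0 k| <= `|x 0 k| * \sum_i `|Q i k|.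
  rewrite -normrM ek mulr_sumr; apply: le_trans (ler_norm_sum _ _ _) _.
  apply: ler_sum => i _; rewrite normrM ler_wpM2r //; exact: kmax.
rewrite mulrC ler_pM2l // => hl.
apply: le_trans (ler_norm l) _; apply: le_trans hl _.
under eq_bigr => i _ do rewrite Qij Qent_sym.
rewrite (sumE (fun a => `|Qent (enum_val k) a|)).
have := oE k; case: (enum_val k) => x1 y1 /= o1.
exact: sumQabs.
Qed.


Lemma tri_le x y : e x y -> (tri_edge e (x, y) <= num_triangles e)%N.
Proof.
move=> exy; have xy : x != y by apply: contraTneq exy => ->; rewrite Eirr.
rewrite /tri_edge /num_triangles /=.
set A := [set w | e x w && e y w].
have inj : {in A &, injective (fun w => [set x; y; w])}.
  move=> w1 w2; rewrite !inE => /andP [xw1 yw1] /andP [xw2 yw2] h.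
  have : w1 \in [set x; y; w2] by rewrite -h !inE eqxx !orbT.
  rewrite !inE => /orP [/orP [] | ] /eqP // ?; subst.
    by rewrite Eirr in xw1.
  by rewrite Eirr in yw1.
rewrite -(card_in_imset inj); apply: subset_leq_card; apply/subsetP => S.
move=> /imsetP [w]; rewrite /A inE => /andP [xw yw] ->.
have wx : x != w by apply: contraTneq xw => ->; rewrite Eirr.
have wy : y != w by apply: contraTneq yw => ->; rewrite Eirr.
have [c cl] := @ict3 V e Esym x y w xy wy wx.
by rewrite inE c cl exy xw yw.
Qed.

Lemma lap_bound : (exists u v, e u v) ->
  exists2 l, eigenvalue (laplacian R e) l & (max_degree e)%:R + 1 <= l.
Proof.
move=> [u [v euv]].
have cardV : (0 < #|V|)%N by apply/card_gt0P; exists u.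
have [v0 dv0] : exists v0, max_degree e = degree e v0.
  by exists [arg max_(i > u) degree e i]%N; rewrite /max_degree (bigop.bigmax_eq_arg u).
set D := max_degree e.
have D1 : (1 <= D)%N.
  apply: (leq_trans _ (@leq_bigmax V (degree e) u)).
  by rewrite /degree; apply/card_gt0P; exists v; rewrite inE.
have dv0' : degree e v0 = D by rewrite /D dv0.
pose fX v : R := if v == v0 then D%:R else if e v0 v then -1 else 0.
pose X : 'rV[R]_#|V| := \row_j fX (enum_val j).
have Lsym : (laplacian R e)^T = laplacian R e by rewrite -BtB trmx_mul trmxK.
have X0 : X != 0.
  apply/negP => /eqP /rowP /(_ (enum_rank v0)); rewrite !mxE enum_rankK /fX eqxx.
  by move/eqP; rewrite pnatr_eq0; apply/negP; rewrite -lt0n.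
have XX : (X *m X^T) 0 0 = D%:R ^+ 2 + D%:R.
  rewrite mxE; under eq_bigr => j _ do rewrite !mxE.
  rewrite (sumV (fun v => fX v * fX v)).
  have -> : \sum_v fX v * fX v = \sum_v ((v == v0)%:R * D%:R ^+ 2 + (e v0 v)%:R).
    apply: eq_bigr => w _; rewrite /fX.
    case: (eqVneq w v0) => [->|wv]; first by rewrite Eirr addr0 mul1r expr2.
    by rewrite mul0r add0r; case: (e v0 w); rewrite ?mulr0 ?mulrNN ?mulr1.
  by rewrite big_split /= sum_eq1 -degreeR dv0'.
have XBE (k : 'I_#|E|) : (X *m B^T) 0 k = fX (enum_val k).2 - fX (enum_val k).1.
  rewrite mxE; under eq_bigr => j _ do rewrite !mxE.
  rewrite (sumV (fun v => fX v * inc (enum_val k) v)) /inc.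
  under eq_bigr => w _ do rewrite mulrBr.
  by rewrite sumrB; under eq_bigr => w _ do rewrite mulrC; rewrite sum_eq1;
     under eq_bigr => w _ do rewrite mulrC; rewrite sum_eq1.
have XLX : (X *m laplacian R e *m X^T) 0 0 =
    \sum_p \sum_q (o p q)%:R * ((fX q - fX p) ^+ 2).
  rewrite -BtB mulmxA -[X *m B^T *m B *m X^T]mulmxA -{2}(trmxK B) -trmx_mul mxE.
  under eq_bigr => k _ do rewrite [(_^T) _ _]mxE XBE -expr2.
  by rewrite (sumE (fun a => (fX a.2 - fX a.1) ^+ 2)).
apply: (@rayleigh R _ (laplacian R e) X (D%:R + 1) Lsym X0).
rewrite XLX XX.
have H p q : (o p q)%:R * (((p == v0)%:R + (q == v0)%:R) * (D%:R + 1) ^+ 2) <=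
    (o p q)%:R * ((fX q - fX p) ^+ 2) :> R.
  case opq: (o p q); last by rewrite !mul0r.
  rewrite !mul1r; have epq := Osub opq; have pq := irr_o _ _ opq.
  case: (eqVneq p v0) => [?|pv]; first subst p.
    have qv : (q == v0) = false by rewrite eq_sym (negbTE pq).
    rewrite /fX qv eqxx epq /=.
    by rewrite le_eqVlt; apply/orP; left; apply/eqP; ring.
  case: (eqVneq q v0) => [?|qv]; first subst q.
    rewrite /fX (negbTE pv) eqxx Esym epq /=.
    by rewrite le_eqVlt; apply/orP; left; apply/eqP; ring.
  by rewrite add0r mul0r sqr_ge0.
apply: le_trans; last by apply: ler_sum => p _; apply: ler_sum => q _; exact: H.
under eq_bigr => p _ do under eq_bigr => q _ do rewrite mulrA mulrDr.
under eq_bigr => p _ do rewrite -mulr_suml.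
rewrite -mulr_suml.
have -> : \sum_p \sum_q ((o p q)%:R * (p == v0)%:R + (o p q)%:R * (q == v0)%:R) = D%:R :> R.
  rewrite -dv0' degreeR.
  under eq_bigr => p _ do rewrite big_split /=.
  rewrite big_split /=.
  rewrite (eq_bigr _ (fun p _ => eq_bigr _ (fun q _ => mulrC _ _))) sum_swap2.
  rewrite (eq_bigr _ (fun p _ => eq_bigr _ (fun q _ => mulrC _ _))) sum_swap1.
  by rewrite -big_split /=; apply: eq_bigr => w _; rewrite Oind.
rewrite le_eqVlt; apply/orP; left; apply/eqP; ring.
Qed.


Lemma main_sec (l1 m1 : R) : (exists u v, e u v) ->
  (num_triangles e <= (max_degree e + 1) %/ 3)%N ->
  largest_eigenvalue (helmholtzian R e o) l1 ->
  largest_eigenvalue (laplacian R e) m1 -> l1 = m1.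
Proof.
move=> ex tri_h [hl1 lmax] [hm1 mmax].
set D := max_degree e.
have [l0 el0 hl0] := lap_bound ex.
have hmu : D%:R + 1 <= m1 := le_trans hl0 (mmax l0 el0).
have t3 : (3 * num_triangles e <= D + 1)%N.
  rewrite mulnC; apply: leq_trans (leq_trunc_div (D + 1) 3).
  by rewrite leq_mul2r.
apply/le_anti/andP; split.
  move/eigenvalueP: hl1 => [x xH x0].
  case: (eqVneq (x *m B) 0) => xB.
    have xQ : x *m Q = l1 *: x.
      by move: xH; rewrite Hdec mulmxDr mulmxA xB mul0mx add0r.
    have [b ob hb] := gersh _ _ x0 xQ.
    have tb : (tri_edge e b <= num_triangles e)%N.
      by case: b ob hb => x1 y1 /= ob _; apply: tri_le _ _ (Osub ob).
    apply: le_trans hb _; apply: le_trans hmu.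
    have : (3 * tri_edge e b <= D + 1)%N.
      by apply: leq_trans t3; rewrite leq_mul2l tb orbT.
    by rewrite -(ler_nat R) natrM natrD.
  apply: mmax; apply/eigenvalueP; exists (x *m B) => //.
  rewrite -BtB !mulmxA.
  have -> : x *m B *m B^T = l1 *: x - x *m Q.
    by move: xH; rewrite Hdec mulmxDr mulmxA => <-; rewrite addrK.
  by rewrite mulmxBl -mulmxA QB mulmx0 subr0 scalemxAl.
move/eigenvalueP: hm1 => [y yL y0].
apply: lmax; apply/eigenvalueP; exists (y *m B^T).
  rewrite Hdec mulmxDr !mulmxA -[y *m B^T *m B]mulmxA BtB yL.
  by rewrite -mulmxA BtQ mulmx0 addr0 scalemxAl.
apply/negP => /eqP z0.
have : y *m (B^T *m B) = 0 by rewrite mulmxA z0 mul0mx.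
rewrite BtB yL => /eqP; rewrite scalemx_eq0 (negbTE y0) orbF => /eqP m0.
by move: hmu; rewrite m0 => /(lt_le_trans (ltr_pwDr ltr01 (ler0n _ D))); rewrite ltxx.
Qed.

End Main.

Theorem corollary5p4 (R : rcfType) (V : finType) (e : rel V) (o : rel V)
    (lambda1 mu1 : R) :
  simple_graph e ->
  (exists u v, e u v) ->
  orientation e o ->
  (num_triangles e <= (max_degree e + 1) %/ 3)%N ->
  largest_eigenvalue (helmholtzian R e o) lambda1 ->
  largest_eigenvalue (laplacian R e) mu1 ->
  lambda1 = mu1.
Proof.
move=> [irr sym] ex [osub oxor].
have Eirr : forall x, e x x = false by move=> x; apply/negbTE.
exact: (@main_sec R V e o Eirr sym osub oxor).
Qed.
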